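(* There is a first-order formula $\psi(\ell,y)$ in the language of rings such that for every field $R$ of positive characteristic and every $\ell\in L\subseteq R[x]$, the set $\{y\in R[x]: R[x]\models\psi(\ell,y)\}$ equals $\operatorname{PPOW}(\ell)$. The formula does not depend on the characteristic.
   Context: For a field $R$ and single indeterminate $x$, $L\subseteq R[x]$ is the set of polynomials of degree $1$. If $\operatorname{char}(R)=p>0$, $\operatorname{PPOW}(\ell)=\{\ell^{p^k}: k\ge1\}$, the set of powers of $\ell$ whose exponent is a positive power of $p$. *)

(* Defs.v *)
From HB Require Import structures.
From mathcomp Require Import all_boot all_order all_algebra.
Set Implicit Arguments. Unset Strict Implicit. Unset Printing Implicit Defensive.
Import GRing.Theory.
Local Open Scope ring_scope.

Inductive rterm : Type :=
  | TVar of nat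
  | TZero
  | TOne
  | TAdd of rterm & rterm
  | TOpp of rterm
  | TMul of rterm & rterm.

Inductive rform : Type :=
  | FEq of rterm & rterm
  | FFalse
  | FNot of rform
  | FAnd of rform & rform
  | FOr of rform & rform
  | FImp of rform & rform
  | FAll of nat & rform
  | FEx of nat & rform.

Section Semantics.
Variable A : comNzRingType.

Fixpoint teval (e : nat -> A) (t : rterm) : A :=
  match t with
  | TVar i => e i
  | TZero => 0
  | TOne => 1
  | TAdd t1 t2 => teval e t1 + teval e t2
  | TOpp t1 => - teval e t1
  | TMul t1 t2 => teval e t1 * teval e t2
  end.

Definition upd (e : nat -> A) (i : nat) (a : A) : nat -> A :=
  fun j => if j == i then a else e j.

Fixpoint fsat (e : nat -> A) (f : rform) : Prop :=
  match f with
  | FEq t1 t2 => teval e t1 = teval e t2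
  | FFalse => False
  | FNot g => ~ fsat e g
  | FAnd g h => fsat e g /\ fsat e h
  | FOr g h => fsat e g \/ fsat e h
  | FImp g h => fsat e g -> fsat e h
  | FAll i g => forall a : A, fsat (upd e i a) g
  | FEx i g => exists a : A, fsat (upd e i a) g
  end.

Definition env2 (l y : A) : nat -> A :=
  fun j => if j == 0%N then l else if j == 1%N then y else 0.

End Semantics.

Definition deg1 (R : fieldType) (l : {poly R}) : Prop := size l = 2%N.

Definition PPOW (R : fieldType) (p : nat) (l : {poly R}) : {poly R} -> Prop :=
  fun y => exists k : nat, (0 < k)%N /\ y = l ^+ (p ^ k).

(* Main.v *)
Require Import Defs.
Set Implicit Arguments. Unset Strict Implicit. Unset Printing Implicit Defensive.
From mathcomp Require Import all_boot all_order all_algebra ring.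

Import GRing.Theory.
Local Open Scope ring_scope.

Definition Pp (R : fieldType) (a b : {poly R}) : Prop :=
  forall d, (exists e, d * e = b) -> (exists v, d * v = 1) \/ (exists w, d = a * w).

Lemma deg1E (R : fieldType) (l : {poly R}) :
  size l = 2%N -> exists c r, c != 0 /\ l = c%:P * ('X - r%:P).
Proof.
move=> hs; have [r hr] := poly2_root hs.
have /factor_theorem [q hq] := hr.
have q0 : q != 0 by apply/eqP=> q0; move: hs; rewrite hq q0 mul0r size_poly0.
have hq1 : size q == 1%N.
  move: hs; rewrite hq size_mul ?polyXsubC_eq0 // size_XsubC.
  by rewrite addn2 => -[->].
have /size_poly1P [c hc0 hc] := hq1.
by exists c, r; split => //; rewrite hq hc mulrC.
Qed.

Lemma dvd_lin (R : fieldType) (c r : R) (q : {poly R}) : c != 0 ->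
  (exists w, q = c%:P * ('X - r%:P) * w) <-> root q r.
Proof.
move=> c0; split.
  by move=> [w ->]; rewrite rootE !hornerM hornerXsubC subrr mulr0 mul0r.
move/factor_theorem => [q' ->]; exists (c^-1%:P * q').
have h : c%:P * (c^-1)%:P = 1 by rewrite -polyCM mulfV.
transitivity (q' * ('X - r%:P) * (c%:P * (c^-1)%:P)); first by rewrite h mulr1.
ring.
Qed.

Lemma unit_formula (R : fieldType) (d : {poly R}) :
  (exists v, d * v = 1) <-> size d = 1%N.
Proof.
split.
  move=> [v hv]; apply/eqP; rewrite -dvdp1; apply/dvdpP; exists v.
  by rewrite mulrC hv.
move/eqP/size_poly1P => [c c0 ->]; exists c^-1%:P.
by rewrite -polyCM mulfV.
Qed.

Lemma Pp_pow (R : fieldType) (a : {poly R}) N : size a = 2%N -> Pp a (a ^+ N).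
Proof.
move=> /deg1E [c [r [c0 ->]]] d [e he].
case: (boolP (root d r)) => hr.
  by right; apply/dvd_lin.
left; apply/unit_formula.
have d0 : d != 0.
  apply/eqP=> d0; move: he; rewrite d0 mul0r => /esym/eqP.
  by rewrite expf_eq0 mulf_eq0 polyC_eq0 (negPf c0) polyXsubC_eq0 andbF.
have hc : coprimep d (('X - r%:P)^+N) by apply: coprimep_expr; rewrite coprimep_XsubC.
have hd : d %| (c%:P)^+N * ('X - r%:P)^+N.
  by apply/dvdpP; exists e; rewrite -exprMn -he mulrC.
rewrite (Gauss_dvdpl _ hc) -polyC_exp in hd.
have := dvdp_leq _ hd; rewrite size_polyC polyC_eq0 expf_neq0 //= => /(_ isT).
move: d0; rewrite -size_poly_eq0.
by case: (size d) => [|[|]].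
Qed.

Lemma Pp_conv (R : fieldType) (a b : {poly R}) : size a = 2%N -> b != 0 -> Pp a b ->
  exists k m, k != 0 /\ b = k%:P * a ^+ m.
Proof.
move=> /deg1E [c [r [c0 ->]]] b0 H.
have [m [q hq hb]] := multiplicity_XsubC b r.
rewrite b0 /= in hq.
have [/unit_formula hs|/(dvd_lin _ _ c0) hr] := H q (ex_intro _ _ (esym hb)); last first.
  by rewrite hr in hq.
have /size_poly1P [k hk0 hk] : size q == 1%N by rewrite hs.
exists (k * (c ^+ m)^-1), m; split.
  by rewrite mulf_neq0 // invr_eq0 expf_neq0.
rewrite hb hk exprMn -polyC_exp mulrA -polyCM -mulrA mulVf ?mulr1 //.
by rewrite expf_neq0.
Qed.
Lemma frobD (R : fieldType) (p : nat) : p \in [pchar R] ->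
  forall x y : {poly R}, (x + y) ^+ p = x ^+ p + y ^+ p.
Proof.
move=> chp x y; have chp' : p \in [pchar {poly R}] by rewrite pchar_poly.
apply: exprDn_pchar.
by rewrite (eq_pnat _ (pcharf_eq chp')) pnat_id // (pcharf_prime chp).
Qed.

Lemma frobDk (R : fieldType) (p : nat) : p \in [pchar R] ->
  forall k (x y : {poly R}), (x + y) ^+ (p ^ k) = x ^+ (p ^ k) + y ^+ (p ^ k).
Proof.
move=> chp k x y; have chp' : p \in [pchar {poly R}] by rewrite pchar_poly.
apply: exprDn_pchar.
by rewrite pnatX (eq_pnat _ (pcharf_eq chp')) pnat_id // (pcharf_prime chp).
Qed.

Lemma frob_inj (R : fieldType) (p : nat) : p \in [pchar R] ->
  forall x y : {poly R}, x ^+ p = y ^+ p -> x = y.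
Proof.
move=> chp x y h.
have e : (x - y) ^+ p = x ^+ p - y ^+ p.
  have e1 : x ^+ p = (x - y) ^+ p + y ^+ p by rewrite -frobD // subrK.
  by rewrite e1 addrK.
apply: subr0_eq; apply/eqP.
have : (x - y) ^+ p == 0 by rewrite e h subrr.
by rewrite expf_eq0 => /andP [].
Qed.

Lemma descent (R : fieldType) (p : nat) (c r : R) : p \in [pchar R] -> c != 0 ->
  forall n, (c%:P * ('X - r%:P)) ^+ n + 1 = (c%:P * ('X - r%:P) + 1) ^+ n ->
  exists k, n = (p ^ k)%N.
Proof.
move=> chp c0; set l := c%:P * ('X - r%:P).
have pp := pcharf_prime chp.
have chp' : p \in [pchar {poly R}] by rewrite pchar_poly.
elim/ltn_ind => n IH H.
case: n IH H => [|n] IH H.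
  move: H; rewrite !expr0 => /eqP; rewrite -subr_eq0 addrK oner_eq0 //.
case: (boolP (p %| n.+1)%N) => hpn.
  have [m hm] := dvdnP hpn.
  have m0 : (0 < m)%N by move: hm; case: m => //.
  have ltm : (m < n.+1)%N.
    by rewrite hm -{1}(muln1 m) ltn_pmul2l // prime_gt1.
  have H' : l ^+ m + 1 = (l + 1) ^+ m.
    apply: (@frob_inj _ _ chp (l ^+ m + 1) ((l + 1) ^+ m)).
    by rewrite frobD // expr1n -exprM -exprM -hm.
  have [k hk] := IH m ltm H'.
  by exists k.+1; rewrite hm hk expnSr.
have hd := congr1 (@deriv _) H.
rewrite !derivD derivC addr0 !deriv_exp derivD derivC addr0 in hd.
have dl : l^`() = c%:P by rewrite /l mul_polyC derivZ derivXsubC -mul_polyC mulr1.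
have hd' : c%:P * l ^+ n * (n.+1)%:R = c%:P * (l + 1) ^+ n * (n.+1)%:R.
  by rewrite !mulr_natr -dl.
have nz : (n.+1)%:R != 0 :> {poly R} by rewrite -(dvdn_pcharf chp').
have hd3 : l ^+ n = (l + 1) ^+ n.
  have c0' : c%:P != 0 :> {poly R} by rewrite polyC_eq0.
  apply: (mulfI c0'); exact: (mulIf nz hd').
have := congr1 (fun q => q.[r]) hd3; rewrite /= !horner_exp hornerD hornerM hornerC hornerXsubC.
rewrite hornerC subrr mulr0 add0r expr1n expr0n.
case: n {IH H hd hd' hd3 hpn nz} => [|n] /=; first by exists 0%N.
by move=> /esym/eqP; rewrite oner_eq0.
Qed.

Lemma sizeX (R : fieldType) (a : {poly R}) n : size a = 2%N -> size (a ^+ n) = n.+1.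
Proof.
move=> hs; have := size_exp a n; rewrite hs mul1n.
have a0 : a != 0 by rewrite -size_poly_eq0 hs.
have : a ^+ n != 0 by rewrite expf_neq0.
move=> h1 h2.
by rewrite -[in RHS]h2 prednK // size_poly_gt0.
Qed.

Definition Pf (A B : rterm) : rform :=
  FAll 2 (FImp (FEx 3 (FEq (TMul (TVar 2) (TVar 3)) B))
    (FOr (FEx 4 (FEq (TMul (TVar 2) (TVar 4)) TOne))
         (FEx 4 (FEq (TVar 2) (TMul A (TVar 4)))))).

Definition psi0 : rform :=
  FAnd (FNot (FEq (TVar 1) TZero))
  (FAnd (FNot (FEq (TVar 1) (TVar 0)))
  (FAnd (FEx 4 (FEq (TVar 1) (TMul (TVar 0) (TVar 4))))
  (FAnd (Pf (TVar 0) (TVar 1)) (Pf (TAdd (TVar 0) TOne) (TAdd (TVar 1) TOne))))).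

Lemma psiE (R : fieldType) (l y : {poly R}) :
  fsat (env2 l y) psi0 <->
  (y <> 0 /\ y <> l /\ (exists w, y = l * w) /\ Pp l y /\ Pp (l + 1) (y + 1)).
Proof. rewrite /psi0 /Pf /Pp /= /upd /env2 /=. by []. Qed.

Theorem corollary2p2 :
  exists psi : rform,
    forall (R : fieldType) (p : nat), p \in [pchar R] ->
    forall l : {poly R}, deg1 l ->
    forall y : {poly R}, fsat (env2 l y) psi <-> PPOW p l y.
Proof.
exists psi0 => R p chp l hl y; rewrite psiE.
have pp := pcharf_prime chp.
have hl1 : size (l + 1) = 2%N by rewrite size_polyDl hl // size_poly1.
have [c [r [c0 hlE]]] := deg1E hl.
have lr : l.[r] = 0 by rewrite hlE hornerM hornerXsubC subrr mulr0.
have l0 : l != 0 by rewrite -size_poly_eq0 hl.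
have lc0 : lead_coef l != 0 by rewrite lead_coef_eq0.
split.
- move=> [y0 [yl [[w hw] [P1 P2]]]].
  have yr : y.[r] = 0 by rewrite hw hornerM lr mul0r.
  have y10 : y + 1 != 0.
    by apply/eqP => h; move: (congr1 (fun q => q.[r]) h); rewrite /= hornerD yr hornerC add0r horner0 => /eqP; rewrite oner_eq0.
  have [K [n [K0 hy]]] := Pp_conv hl (introN eqP y0) P1.
  have [D [m [D0 hy1]]] := Pp_conv hl1 y10 P2.
  have n0 : (0 < n)%N.
    case: n hy => // hy; move: yr; rewrite hy expr0 mulr1 hornerC => /eqP.
    by rewrite (negPf K0).
  have D1 : D = 1.
    have := congr1 (fun q => q.[r]) hy1; rewrite /= hornerD yr add0r hornerC.
    rewrite hornerM hornerC horner_exp hornerD lr hornerC add0r expr1n mulr1.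
    by move=> ->.
  rewrite D1 polyC1 mul1r in hy1.
  have sy : size y = n.+1 by rewrite hy size_Cmul // sizeX.
  have sy1 : size (y + 1) = n.+1 by rewrite size_polyDl sy // size_poly1.
  have nm : n = m.
    by move: sy1; rewrite hy1 sizeX // => -[].
  subst m.
  have ll1 : lead_coef (l + 1) = lead_coef l by rewrite lead_coefDl // hl size_poly1.
  have K1 : K = 1.
    have := congr1 (@lead_coef _) hy1.
    rewrite lead_coefDl ?sy ?size_poly1 // hy lead_coefM lead_coefC !lead_coef_exp ll1.
    move=> h; apply: (mulIf (expf_neq0 n lc0)); by rewrite mul1r.
  rewrite K1 polyC1 mul1r in hy.
  rewrite hy in hy1.
  have hy1' : (c%:P * ('X - r%:P)) ^+ n + 1 = (c%:P * ('X - r%:P) + 1) ^+ n.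
    by rewrite -hlE.
  have [k hk] := descent chp c0 hy1'.
  exists k; split; last by rewrite hy hk.
  case: k hk => // hk; exfalso; apply: yl; by rewrite hy hk expn0 expr1.
- move=> [k [k0 ->]].
  have N0 : (0 < p ^ k)%N by rewrite expn_gt0 prime_gt0.
  split; first by apply/eqP; rewrite expf_neq0.
  split.
    move=> h; have := congr1 (fun q : {poly R} => size q) h; rewrite /= sizeX // hl => -[] h1.
    have : (p ^ k == p ^ 0)%N by rewrite h1.
    rewrite eqn_exp2l ?prime_gt1 // => /eqP k00.
    by rewrite k00 in k0.
  split; first by exists (l ^+ (p ^ k).-1); rewrite -exprS prednK.
  split; first exact: Pp_pow.
  rewrite -{2}(expr1n _ (p ^ k)) -frobDk //; exact: Pp_pow.
Qed.
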